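(* Let $B$ be a nonzero real vector space and $\lfloor\cdot,\cdot\rfloor\colon B\times B\to\mathbb{R}$ a symmetric bilinear form, and put $q(b):=\tfrac12\lfloor b,b\rfloor$. Let $f\colon B\to\,]{-}\infty,\infty]$ be proper and convex with $f\ge q$ on $B$. Then $f^@=q$ on ${\cal P}_q(f)$.
   Context: Here $f^@$ is the Fenchel conjugate of $f$ with respect to $\lfloor\cdot,\cdot\rfloor$: $f^@(c):=\sup_{b\in B}\big[\lfloor b,c\rfloor-f(b)\big]$ for $c\in B$. For $f\ge q$, ${\cal P}_q(f):=\{b\in B\colon f(b)=q(b)\}$. ''Proper'' means $f$ is not identically $\infty$. *)

(* Defs.v *)
From HB Require Import structures.
From mathcomp Require Import all_boot all_order all_algebra.
From mathcomp Require Import all_classical all_reals ereal.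
Set Implicit Arguments. Unset Strict Implicit. Unset Printing Implicit Defensive.
Import Order.TTheory GRing.Theory Num.Theory.
Local Open Scope ring_scope.
Local Open Scope classical_set_scope.

Definition symmetric_bilinear (R : realType) (B : lmodType R) (bf : B -> B -> R) :=
  (forall (a : R) (x y z : B), bf (a *: x + y) z = a * bf x z + bf y z) /\
  (forall x y : B, bf x y = bf y x).

Definition qform (R : realType) (B : lmodType R) (bf : B -> B -> R) (b : B) : R :=
  bf b b / 2.

Definition proper_fun (R : realType) (B : lmodType R) (f : B -> \bar R) :=
  (forall b, f b != -oo%E) /\ (exists b, f b != +oo%E).

Definition convex_efun (R : realType) (B : lmodType R) (f : B -> \bar R) :=
  forall (x y : B) (t : R), 0 < t < 1 ->
    (f (t *: x + (1 - t) *: y)%R <= t%:E * f x + (1 - t)%:E * f y)%E.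

Definition fconj (R : realType) (B : lmodType R) (bf : B -> B -> R)
  (f : B -> \bar R) (c : B) : \bar R :=
  ereal_sup [set ((bf b c)%:E - f b)%E | b in [set: B]].

Definition Pq (R : realType) (B : lmodType R) (bf : B -> B -> R)
  (f : B -> \bar R) : set B := [set b | f b = (qform bf b)%:E].

(* Main.v *)
Require Import Defs.
From HB Require Import structures.
From mathcomp Require Import all_boot all_order all_algebra.
From mathcomp Require Import all_classical all_reals ereal.
From mathcomp Require Import ring lra.
Import Order.TTheory GRing.Theory Num.Theory.
Local Open Scope ring_scope.
Local Open Scope classical_set_scope.

Lemma key_real (R : realType) (K beta r : R) :
  (forall t : R, 0 < t < 1 -> t * K + beta <= r) -> beta <= r.
Proof.
move=> H; rewrite leNgt; apply/negP => Hlt.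
set e := beta - r.
have e0 : 0 < e by rewrite /e subr_gt0.
set t := e / (2 * (`|K| + e)).
have Kp : 0 <= `|K| by [].
have d0 : 0 < 2 * (`|K| + e) by lra.
have t0 : 0 < t by rewrite /t divr_gt0.
have tle : t * (2 * (`|K| + e)) = e by rewrite /t mulfVK // gt_eqF.
have t1 : t < 1 by nra.
have := H t; rewrite t0 t1 => /(_ isT) Ht.
have := ler_norm (- K); rewrite normrN.
move=> HK.
have h1 : 0 <= t * (K + `|K|) by apply: mulr_ge0; [exact: ltW | lra].
have h2 : 0 <= t * e by rewrite mulr_ge0 // ltW.
have He : e = beta - r by [].
clearbody e t.
rewrite mulrDr in h1.
rewrite mulrDr mulrDr in tle.
lra.
Qed.

Theorem lemma3p7 (R : realType) (B : lmodType R) (bf : B -> B -> R)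
  (f : B -> \bar R) :
  (exists b0 : B, b0 != 0) ->
  symmetric_bilinear bf ->
  proper_fun f ->
  convex_efun f ->
  (forall b, ((qform bf b)%:E <= f b)%E) ->
  forall b, b \in Pq bf f -> fconj bf f b = (qform bf b)%:E.
Proof.
move=> _ [lin sym] [fninf _] fcvx fq b.
rewrite inE /Pq /= => fb.
have bf0 : forall z, bf 0 z = 0.
  move=> z; have := lin 1 0 0 z; rewrite scale1r addr0 mul1r => h; lra.
have bfZ : forall a x z, bf (a *: x) z = a * bf x z.
  by move=> a x z; rewrite -[a *: x]addr0 lin bf0 addr0.
have bfD : forall x y z, bf (x + y) z = bf x z + bf y z.
  by move=> x y z; rewrite -[x in x + y]scale1r lin mul1r.
have bfZr : forall a x z, bf z (a *: x) = a * bf z x.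
  by move=> a x z; rewrite sym bfZ sym.
have bfDr : forall x y z, bf z (x + y) = bf z x + bf z y.
  by move=> x y z; rewrite sym bfD !(sym z).
apply/eqP; rewrite eq_le; apply/andP; split; last first.
  apply: le_ereal_sup_tmp; exists ((bf b b)%:E - f b)%E; first by exists b.
  by rewrite fb -EFinB lee_fin /qform; lra.
apply: ge_ereal_sup => _ [c _ <-].
case Hfc: (f c) => [r| |]; last by have := fninf c; rewrite Hfc.
  2: by rewrite addeNy leNye.
rewrite -EFinB lee_fin.
set K := bf c c / 2 - bf c b + bf b b / 2.
suff : bf c b - bf b b / 2 <= r by rewrite /qform; lra.
apply: (@key_real R K) => t /andP[t0 t1].
have := fcvx c b t; rewrite t0 t1 => /(_ isT).
rewrite Hfc fb -!EFinM -EFinD => hc.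
have := le_trans (fq _) hc; rewrite lee_fin /qform.
rewrite !(bfD, bfZ, bfDr, bfZr) [bf b c]sym => h.
have E : t * (t * K + (bf c b - bf b b / 2)) =
  (t * (t * bf c c + (1 - t) * bf c b) +
     (1 - t) * (t * bf c b + (1 - t) * bf b b)) / 2 - (1 - t) * (bf b b / 2).
  by rewrite /K; move: (bf c c) (bf c b) (bf b b) => x y z; field.
have : t * (t * K + (bf c b - bf b b / 2)) <= t * r by rewrite E; lra.
by rewrite ler_pM2l.
Qed.
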